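(* Fix $C>0$ and $Q\in\mathbb{N}$. Let $L\in\{\mathrm{OR},\mathrm{SUM},\mathrm{OR2},\mathrm{SUM2}\}$ and let $\{\mathcal{L}_n\}$ be a family in which each $\mathcal{L}_n$ is a strip pattern set of width $C$ and density $Q$ on the $n\times n$ image $I_n$, such that $|\mathcal{L}_n|=\Theta(n^2)$ and $V(\mathcal{L}_n)=\Omega(n^3)$. Then $L(\mathcal{L}_n)=\Omega(n^2\log n)$.
   Context: Image: the $n\times n$ image $I_n$ is the set of $n^2$ pixel variables $p_{ij}$, $i,j=0,\dots,n-1$; pixel $p_{ij}$ is identified with the integer point $(i,j)\in\mathbb{R}^2$. A pattern is a nonempty subset of the image; a pattern set $\mathcal{T}=\{T_k\}_{k=1}^m$ is a nonempty set of $m$ distinct patterns, and its volume is $V(\mathcal{T})=\sum_{T\in\mathcal{T}}|T|$. Computing $\mathcal{T}$ means computing simultaneously $y_k=\sum_{p\in T_k}p$, $k=1,\dots,m$, where ''sum'' is a commutative semigroup operation on pixel values. Circuits: a circuit is a directed acyclic graph with one input node of fanin zero per pixel and $m$ output nodes $y_k$ of fanout zero; every node of nonzero fanin (a gate) may have any positive number of incoming edges and computes the semigroup sum of its in-neighbours' values. The size of a circuit is its number of edges. A circuit computes $\mathcal{T}$ if for every input assignment each $y_k$ equals $\sum_{p\in T_k}p$. $\mathrm{OR}(\mathcal{T})$ (resp. $\mathrm{SUM}(\mathcal{T})$) is the minimal size of a circuit computing $\mathcal{T}$ over $(\{0,1\},\vee)$ (resp. $(\mathbb{N},+)$). $\mathrm{OR2}(\mathcal{T})$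 (resp. $\mathrm{SUM2}(\mathcal{T})$) is the minimal number of gates of a circuit computing $\mathcal{T}$ over $(\{0,1\},\vee)$ (resp. $(\mathbb{N},+)$) in which all nodes have fanin at most $2$. Strips: for a line $l\subset\mathbb{R}^2$ and $C>0$, $s(l,C)=\{r\in\mathbb{R}^2\mid \rho(r,l)\leqslant C/2\}$ ($\rho$ Euclidean distance). A line is mostly horizontal inclined to the right if it has equation $y=ax+b$ with $0\leqslant a\leqslant1$; such a line is integer at an image of width $w$ if $a=\frac{e}{w-1}$ for some $e\in\{0,1,\dots,w-1\}$ (here $w=n$). Patterns $T\in\mathcal{M}$ are $C$-parallel if there is a family of integer lines $\{l(T)\mid T\in\mathcal{M}\}$, all with the same slope, such that $T\subset s(l(T),C)$ for all $T\in\mathcal{M}$. A pattern set $\mathcal{L}$ is a strip pattern set of width $C>0$ and density $Q\in\mathbb{N}$ if (1) for every $L\in\mathcal{L}$ there is an integer line $l$ with $L\subset s(l,C)$, and (2) every $C$-parallel subset $\mathcal{M}\subseteq\mathcal{L}$ with $\bigcap_{L\in\mathcal{M}}L\neq\varnothing$ satisfies $|\mathcal{M}|\leqslant Q$. *)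

(* Defs.v *)
From HB Require Import structures.
From mathcomp Require Import all_boot all_order all_algebra.
From mathcomp Require Import boolp reals exp.
Set Implicit Arguments.
Unset Strict Implicit.
Unset Printing Implicit Defensive.
Import Order.TTheory GRing.Theory Num.Theory.

Definition pixel (n : nat) : finType := ('I_n * 'I_n)%type.

Definition pattern_set (n : nat) (PS : {set {set pixel n}}) : Prop :=
  PS != set0 /\ forall T, T \in PS -> T != set0.

Definition volume (n : nat) (PS : {set {set pixel n}}) : nat :=
  \sum_(T in PS) #|T|.

(* An in-neighbour of a gate: an input node (a pixel) or an earlier gate
   (gates are numbered 0,1,... in a topological order). *)
Inductive wire (n : nat) : Type :=
| WIn of pixel n
| WGate of nat.

(* A circuit: a list of gates; gate i is the (multi)list of its in-neighbours.
   One edge per list entry, so the size (number of edges) is the total length. *)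
Definition circuit (n : nat) := seq (seq (wire n)).

Definition wire_ref (n : nat) (k : nat) (w : wire n) : bool :=
  if w is WGate j then j == k else false.

Definition wire_before (n : nat) (i : nat) (w : wire n) : bool :=
  if w is WGate j then j < i else true.

Definition wf_circuit (n : nat) (c : circuit n) : Prop :=
  forall i, i < size c ->
    (0 < size (nth [::] c i))%N /\ all (wire_before i) (nth [::] c i).

Definition fanin2 (n : nat) (c : circuit n) : bool :=
  all (fun g => size g <= 2) c.

Definition csize (n : nat) (c : circuit n) : nat := sumn (map size c).

Definition fanout0 (n : nat) (c : circuit n) (k : nat) : bool :=
  ~~ has (fun g => has (wire_ref k) g) c.

(* Evaluation over a commutative semigroup given as (op, idx); for the two
   semigroups used here, ({0,1},\/) and (N,+), idx is the neutral element and
   gates are nonempty, so the value of a gate is the semigroup sum of the values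
   of its in-neighbours. *)
Section Eval.
Variables (S : Type) (op : S -> S -> S) (idx : S) (n : nat) (x : pixel n -> S).

Definition wire_val (acc : seq S) (w : wire n) : S :=
  match w with WIn p => x p | WGate k => nth idx acc k end.

Fixpoint eval_aux (gs : circuit n) (acc : seq S) : seq S :=
  match gs with
  | [::] => acc
  | g :: gs' => eval_aux gs' (rcons acc (foldr op idx (map (wire_val acc) g)))
  end.

Definition gate_values (c : circuit n) : seq S := eval_aux c [::].
End Eval.

Definition or_sum (n : nat) (x : pixel n -> bool) (T : {set pixel n}) : bool :=
  [exists p in T, x p].
Definition nat_sum (n : nat) (x : pixel n -> nat) (T : {set pixel n}) : nat :=
  \sum_(p in T) x p.

(* c computes PS over ({0,1},\/): each pattern has an output gate of fanout 0
   computing its OR for every input assignment.  (Distinct patterns give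
   distinct functions, so these output gates are automatically distinct.) *)
Definition computes_or (n : nat) (c : circuit n) (PS : {set {set pixel n}}) : Prop :=
  forall T, T \in PS -> exists2 g, g < size c &
    fanout0 c g /\ forall x : pixel n -> bool,
      nth false (gate_values orb false x c) g = or_sum x T.

Definition computes_sum (n : nat) (c : circuit n) (PS : {set {set pixel n}}) : Prop :=
  forall T, T \in PS -> exists2 g, g < size c &
    fanout0 c g /\ forall x : pixel n -> nat,
      nth 0%N (gate_values addn 0%N x c) g = nat_sum x T.

(* least natural number satisfying P (0 if none) *)
Definition min_nat (P : nat -> Prop) : nat :=
  match pselect (exists k, P k) with
  | left h =>
      @ex_minn (fun k => `[< P k >])
        (let: ex_intro k hk := h in ex_intro _ k (asboolT hk))
  | right _ => 0%N
  end.

Definition OR (n : nat) (PS : {set {set pixel n}}) : nat :=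
  min_nat (fun k => exists c : circuit n, [/\ wf_circuit c, computes_or c PS & csize c = k]).
Definition SUM (n : nat) (PS : {set {set pixel n}}) : nat :=
  min_nat (fun k => exists c : circuit n, [/\ wf_circuit c, computes_sum c PS & csize c = k]).
Definition OR2 (n : nat) (PS : {set {set pixel n}}) : nat :=
  min_nat (fun k => exists c : circuit n,
    [/\ wf_circuit c, fanin2 c, computes_or c PS & size c = k]).
Definition SUM2 (n : nat) (PS : {set {set pixel n}}) : nat :=
  min_nat (fun k => exists c : circuit n,
    [/\ wf_circuit c, fanin2 c, computes_sum c PS & size c = k]).

Inductive complexity := cOR | cSUM | cOR2 | cSUM2.

Definition cost (L : complexity) (n : nat) (PS : {set {set pixel n}}) : nat :=
  match L with
  | cOR => OR PS | cSUM => SUM PS | cOR2 => OR2 PS | cSUM2 => SUM2 PS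
  end.

Local Open Scope ring_scope.

Section Strips.
Variables (R : realType) (n : nat).

Definition px (p : pixel n) : R := (val p.1)%:R.
Definition py (p : pixel n) : R := (val p.2)%:R.

Definition dist_line (a b x0 y0 : R) : R :=
  `|a * x0 + b - y0| / Num.sqrt (1 + a ^+ 2).

Definition in_strip (a b C : R) (p : pixel n) : bool :=
  dist_line a b (px p) (py p) <= C / 2.

(* slope of a line which is mostly horizontal inclined to the right and
   integer at an image of width w = n *)
Definition integer_slope (a : R) : Prop :=
  exists2 e : nat, (e < n)%N & a = e%:R / (n.-1)%:R.

Definition in_strip_set (a b C : R) (T : {set pixel n}) : Prop :=
  forall p, p \in T -> in_strip a b C p.

Definition C_parallel (C : R) (M : {set {set pixel n}}) : Prop :=
  exists2 a, integer_slope a &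
    forall T, T \in M -> exists b : R, in_strip_set a b C T.

Definition strip_pattern_set (C : R) (Q : nat) (PS : {set {set pixel n}}) : Prop :=
  [/\ pattern_set PS,
      (forall T, T \in PS -> exists a b : R, integer_slope a /\ in_strip_set a b C T)
    & (forall M : {set {set pixel n}}, M \subset PS -> C_parallel C M ->
         \bigcap_(T in M) T != set0 -> (#|M| <= Q)%N)].
End Strips.

(* Main.v *)
Require Import Defs.
From HB Require Import structures.
From mathcomp Require Import all_boot all_order all_algebra.
From mathcomp Require Import boolp reals exp.
From mathcomp Require Import zify ring lra.
Import Order.TTheory GRing.Theory Num.Theory.
Set Implicit Arguments.
Unset Strict Implicit.
Unset Printing Implicit Defensive.

Section EvalLemmas.
Variables (Sg : Type) (op : Sg -> Sg -> Sg) (idx : Sg) (n : nat).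

Lemma eval_aux_prefix (x : pixel n -> Sg) gs acc :
  exists t, eval_aux op idx x gs acc = acc ++ t.
Proof.
elim: gs acc => [|g gs IH] acc /=; first by exists [::]; rewrite cats0.
have [t ->] := IH (rcons acc (foldr op idx (map (wire_val idx x acc) g))).
by exists ((foldr op idx (map (wire_val idx x acc) g)) :: t); rewrite cat_rcons.
Qed.

Lemma size_eval_aux (x : pixel n -> Sg) gs acc :
  size (eval_aux op idx x gs acc) = (size acc + size gs)%N.
Proof.
elim: gs acc => [|g gs IH] acc /=; first by rewrite addn0.
by rewrite IH size_rcons addSnnS.
Qed.

Lemma nth_eval_aux (x : pixel n -> Sg) gs acc i : (i < size gs)%N ->
  nth idx (eval_aux op idx x gs acc) (size acc + i) =
  foldr op idx (map (wire_val idx x (take (size acc + i) (eval_aux op idx x gs acc)))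
     (nth [::] gs i)).
Proof.
elim: gs acc i => [|g gs IH] acc i //= Hi.
case: i Hi => [|i] Hi.
  rewrite addn0.
  set v := foldr _ _ _.
  have [t ->] := eval_aux_prefix x gs (rcons acc v).
  rewrite nth_cat size_rcons ltnSn nth_rcons (ltnn (size acc)) eqxx /=.
  by rewrite take_cat size_rcons ltnSn -cats1 take_size_cat.
by have := IH (rcons acc (foldr op idx (map (wire_val idx x acc) g))) i Hi; rewrite size_rcons addSnnS.
Qed.

Lemma nth_gate_values (x : pixel n -> Sg) (c : circuit n) i :
  (i < size c)%N -> all (wire_before i) (nth [::] c i) ->
  nth idx (gate_values op idx x c) i =
  foldr op idx (map (wire_val idx x (gate_values op idx x c)) (nth [::] c i)).
Proof.
move=> Hi Hw.
have := nth_eval_aux x [::] Hi; rewrite /= add0n => ->.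
rewrite /gate_values; congr foldr.
elim: (nth [::] c i) Hw => //= w l IHl /andP[Hw1 Hl]; rewrite IHl //.
by case: w Hw1 => //= k Hk; rewrite nth_take.
Qed.

Lemma size_gate_values (x : pixel n -> Sg) (c : circuit n) :
  size (gate_values op idx x c) = size c.
Proof. by rewrite /gate_values size_eval_aux. Qed.

End EvalLemmas.

Section Hom.
Variables (S1 S2 : Type) (op1 : S1 -> S1 -> S1) (idx1 : S1)
  (op2 : S2 -> S2 -> S2) (idx2 : S2) (f : S1 -> S2) (n : nat)
  (x1 : pixel n -> S1) (x2 : pixel n -> S2).
Hypotheses (f0 : f idx1 = idx2) (fop : forall a b, f (op1 a b) = op2 (f a) (f b))
  (fx : forall p, f (x1 p) = x2 p).

Lemma hom_eval_aux gs acc :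
  map f (eval_aux op1 idx1 x1 gs acc) = eval_aux op2 idx2 x2 gs (map f acc).
Proof.
elim: gs acc => [|g gs IH] acc //=.
rewrite IH map_rcons; congr (eval_aux _ _ _ _ (rcons _ _)).
elim: g => [|w g IHg] //=.
rewrite fop IHg; congr op2.
case: w => [p|k] //=.
case: (ltnP k (size acc)) => Hk; first by rewrite (nth_map idx1) // f0.
by rewrite !nth_default ?size_map.
Qed.

Lemma hom_gate_values (c : circuit n) :
  map f (gate_values op1 idx1 x1 c) = gate_values op2 idx2 x2 c.
Proof. exact: hom_eval_aux. Qed.

Lemma hom_nth_gate_values (c : circuit n) i :
  f (nth idx1 (gate_values op1 idx1 x1 c) i) = nth idx2 (gate_values op2 idx2 x2 c) i.
Proof.
rewrite -hom_gate_values.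
case: (ltnP i (size (gate_values op1 idx1 x1 c))) => Hk; first by rewrite (nth_map idx1).
by rewrite !nth_default ?size_map.
Qed.
End Hom.
Section Sets.
Variable n : nat.
Implicit Types (c : circuit n) (PS : {set {set pixel n}}).

Definition Sset c : seq {set pixel n} := gate_values (@setU _) set0 (fun p => [set p]) c.
Definition Sof c g := nth set0 (Sset c) g.
Definition Swire c (w : wire n) :=
  match w with WIn p => [set p] | WGate k => Sof c k end.

Lemma Sof_gate c g p : wf_circuit c -> (g < size c)%N ->
  (p \in Sof c g) = has (fun w => p \in Swire c w) (nth [::] c g).
Proof.
move=> wf Hg; rewrite /Sof nth_gate_values //; last by case: (wf g Hg).
elim: (nth [::] c g) => [|w l IH] /=; first by rewrite in_set0.
by rewrite in_setU IH; case: w.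
Qed.


Lemma or_of_sets c (x : pixel n -> bool) g :
  nth false (gate_values orb false x c) g = or_sum x (Sof c g).
Proof.
rewrite /Sof /Sset.
rewrite -(hom_nth_gate_values (op1 := @setU _) (idx1 := set0) (op2 := orb) (idx2 := false) (f := or_sum x) (x1 := fun p => [set p]) (x2 := x)) //.
- by apply/existsP => -[p]; rewrite in_set0.
- move=> A B; rewrite /or_sum; apply/idP/idP.
    case/existsP => p /andP[]; rewrite in_setU => /orP[] Hp Hx; apply/orP; [left|right];
      by apply/existsP; exists p; rewrite Hp.
  case/orP => /existsP[p /andP[Hp Hx]]; apply/existsP; exists p; by rewrite in_setU Hp ?orbT.
- move=> p; apply/existsP/idP => [[q /andP[]]|Hx]; first by rewrite in_set1 => /eqP->.
  by exists p; rewrite in_set1 eqxx.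
Qed.

Lemma sum_to_or c (x : pixel n -> bool) g :
  nth false (gate_values orb false x c) g =
  (0 < nth 0 (gate_values addn 0 (fun p => nat_of_bool (x p)) c) g)%N.
Proof.
rewrite -(hom_nth_gate_values (op1 := addn) (idx1 := 0%N) (op2 := orb) (idx2 := false) (f := fun k : nat => (0 < k)%N) (x1 := fun p => nat_of_bool (x p)) (x2 := x)) //.
- by move=> a b; rewrite addn_gt0.
- by move=> p; case: (x p).
Qed.

Definition computes_sets c PS :=
  forall T, T \in PS -> exists2 g, (g < size c)%N & Sof c g = T.

Lemma or_sum1 (A : {set pixel n}) p : or_sum (fun q => q == p) A = (p \in A).
Proof.
apply/existsP/idP => [[q /andP[Hq /eqP <-]] // | Hp].
by exists p; rewrite Hp eqxx.
Qed.

Lemma or_sets c PS : computes_or c PS -> computes_sets c PS.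
Proof.
move=> H T HT; have [g Hg [_ Hv]] := H T HT; exists g => //.
by apply/setP => p; have := Hv (fun q => q == p); rewrite or_of_sets !or_sum1.
Qed.

Lemma sum_sets c PS : computes_sum c PS -> computes_sets c PS.
Proof.
move=> H; apply: or_sets => T HT; have [g Hg [F Hv]] := H T HT; exists g => //; split => // x.
rewrite sum_to_or Hv /nat_sum /or_sum lt0n sum_nat_eq0 negb_forall.
apply/existsP/existsP => [[p]|[p /andP[Hp Hx]]].
  rewrite negb_imply => /andP[Hp Hx0]; exists p; rewrite Hp /=; by move: Hx0; case: (x p).
by exists p; rewrite negb_imply Hp; move: Hx; case: (x p).
Qed.
End Sets.
Definition wire_enc n (w : wire n) : pixel n + nat :=
  match w with WIn p => inl p | WGate k => inr k end.
Definition wire_dec n (u : pixel n + nat) : wire n :=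
  match u with inl p => WIn p | inr k => WGate n k end.
Lemma wire_encK n : cancel (@wire_enc n) (@wire_dec n).
Proof. by case. Qed.
HB.instance Definition _ (n : nat) := Equality.copy (wire n) (can_type (@wire_encK n)).

Lemma card_big_setU_le (T : finType) (I : Type) (r : seq I) (P : pred I) (F : I -> {set T}) :
  (#|\big[@setU T/set0]_(i <- r | P i) F i| <= \sum_(i <- r | P i) #|F i|)%N.
Proof.
apply: (big_ind2 (fun (A : {set T}) (k : nat) => is_true (#|A| <= k)%N)) => //; first by rewrite cards0.
move=> A a B b HA HB; apply: leq_trans (leq_card_setU A B) _; exact: leq_add.
Qed.

Lemma in_big_setU_seq (T : finType) (I : Type) (r : seq I) (P : pred I) (F : I -> {set T}) p :
  (p \in \big[@setU T/set0]_(i <- r | P i) F i) = has (fun i => P i && (p \in F i)) r.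
Proof.
elim: r => [|i r IH]; first by rewrite big_nil in_set0.
by rewrite big_cons /=; case: (P i) => //=; rewrite in_setU IH.
Qed.

Section Cover.
Variables (n : nat) (c : circuit n).
Hypothesis wfc : wf_circuit c.

Definition fanin g := size (nth [::] c g).

Definition Nsum (T : {set pixel n}) s :=
  (\sum_(g < size c | (Sof c g \subset T) && (s <= #|Sof c g|)) fanin g)%N.

Definition Cov (T : {set pixel n}) s :=
  \big[@setU _/set0]_(g < size c | (Sof c g \subset T) && (s <= #|Sof c g|))
     \big[@setU _/set0]_(w <- nth [::] c g | (#|Swire c w| < s)%N) Swire c w.

Lemma Swire_sub g w : (g < size c)%N -> w \in nth [::] c g -> Swire c w \subset Sof c g.
Proof.
move=> Hg Hw; apply/subsetP => p Hp; rewrite Sof_gate //; by apply/hasP; exists w.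
Qed.

Lemma cover_lem (T : {set pixel n}) s : (1 < s)%N -> forall g, (g < size c)%N ->
  Sof c g \subset T -> (s <= #|Sof c g|)%N -> Sof c g \subset Cov T s.
Proof.
move=> Hs1; elim/ltn_ind => g IH Hg HT Hs.
apply/subsetP => p; rewrite Sof_gate // => /hasP[w Hw Hpw].
case: (ltnP #|Swire c w| s) => Hsm.
  apply/bigcupP; exists (Ordinal Hg); first by rewrite /= HT Hs.
  by rewrite in_big_setU_seq; apply/hasP; exists w => //; rewrite Hsm Hpw.
have [_ /allP /(_ w Hw)] := wfc Hg.
case: w Hw Hpw Hsm => [q|k] Hw Hpw Hsm /= Hk.
  by move: Hsm; rewrite /= cards1 => Hsm; move: (leq_trans Hs1 Hsm).
have Hsub := Swire_sub Hg Hw; rewrite /= in Hsub Hpw Hsm.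
have Hkc : (k < size c)%N by apply: ltn_trans Hk Hg.
by apply: (subsetP (IH k Hk Hkc (subset_trans Hsub HT) Hsm)).
Qed.

Lemma sum_seq_const_le (I : Type) (r : seq I) (P : pred I) (F : I -> nat) k :
  (forall i, P i -> F i <= k)%N -> (\sum_(i <- r | P i) F i <= size r * k)%N.
Proof.
move=> H; elim: r => [|i r IH]; first by rewrite big_nil.
rewrite big_cons /=; case: ifP => Hi; last by apply: leq_trans IH _; rewrite mulSn leq_addl.
by rewrite mulSn leq_add // H.
Qed.

Lemma threshold (T : {set pixel n}) g0 s : (g0 < size c)%N -> Sof c g0 = T -> (1 < s)%N -> (s <= #|T|)%N ->
  (#|T| <= (s.-1) * Nsum T s)%N.
Proof.
move=> Hg0 HT Hs1 Hs.
have H1 : T \subset Cov T s by rewrite -HT; apply: cover_lem => //; rewrite HT.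
apply: leq_trans (subset_leq_card H1) _.
apply: leq_trans (card_big_setU_le _ _ _) _.
rewrite /Nsum big_distrr /=; apply: leq_sum => g _.
apply: leq_trans (card_big_setU_le _ _ _) _.
rewrite mulnC; apply: sum_seq_const_le => w Hw; rewrite -ltnS prednK //.
exact: ltn_trans Hs1.
Qed.

End Cover.
Lemma count_le_sum (b k : nat) :
  (\sum_(1 <= s < b) (s <= k) = minn b.-1 k)%N.
Proof.
elim: b => [|b IH]; first by rewrite big_geq // min0n.
case: b IH => [|b] IH; first by rewrite big_geq // min0n.
rewrite big_nat_recr //= IH /=.
rewrite /minn; case: (ltnP b k) => H1; case: (ltnP b.+1 k) => H2 //=; lia.
Qed.

Section WLower.
Variables (R : realType) (n : nat) (c : circuit n).
Hypothesis wfc : wf_circuit c.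

Definition Wt (T : {set pixel n}) :=
  (\sum_(g < size c | Sof c g \subset T) fanin c g * #|Sof c g|)%N.

Lemma sumN_le_W (T : {set pixel n}) :
  (\sum_(1 <= s < #|T|.+1) Nsum c T s <= Wt T)%N.
Proof.
rewrite /Nsum.
under eq_bigr => s _ do rewrite big_mkcondr /=.
rewrite exchange_big /Wt; apply: leq_sum => g Hg.
have -> : (\sum_(1 <= s < #|T|.+1) (if s <= #|Sof c g| then fanin c g else 0) =
           \sum_(1 <= s < #|T|.+1) (s <= #|Sof c g|) * fanin c g)%N.
  by apply: eq_bigr => s _; case: (_ <= _)%N; rewrite ?mul1n ?mul0n.
by rewrite -big_distrl /= count_le_sum mulnC leq_mul2l geq_minr orbT.
Qed.

Local Open Scope ring_scope.

Lemma harmonic_ln (t : nat) : (1 <= t)%N ->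
  ln (t%:R : R) <= \sum_(2 <= s < t.+1) (s.-1)%:R^-1.
Proof.
elim: t => [//|t IH] _.
case: t IH => [|t] IH; first by rewrite ln1 big_geq.
rewrite big_nat_recr //=.
have H := IH isT.
have Ht : (0 : R) < t.+1%:R by rewrite ltr0n.
have -> : (t.+2%:R : R) = t.+1%:R * (1 + t.+1%:R^-1).
  by rewrite mulrDr mulr1 mulfV ?gt_eqF // -natr1.
rewrite lnM ?posrE //; last by rewrite addr_gt0 // invr_gt0.
apply: lerD => //; apply: le_ln1Dx.
by apply: lt_le_trans (_ : (-1 : R) < 0) _; rewrite ?ltrN10 // invr_ge0 ler0n.
Qed.

Lemma W_lower (T : {set pixel n}) g0 : (g0 < size c)%N -> Sof c g0 = T ->
  (#|T|%:R : R) * ln (#|T|%:R) <= (Wt T)%:R.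
Proof.
move=> Hg0 HT.
case: (posnP #|T|) => Ht0; first by rewrite Ht0 mul0r ler0n.
apply: le_trans (_ : (\sum_(1 <= s < #|T|.+1) Nsum c T s)%:R <= _);
  last by rewrite ler_nat sumN_le_W.
rewrite big_ltn ?ltnS // natrD natr_sum.
apply: le_trans (_ : \sum_(2 <= s < #|T|.+1) (Nsum c T s)%:R <= _);
  last by rewrite lerDr ler0n.
apply: le_trans (_ : #|T|%:R * \sum_(2 <= s < #|T|.+1) (s.-1)%:R^-1 <= _).
  by rewrite ler_wpM2l ?ler0n // harmonic_ln.
rewrite mulr_sumr; apply: ler_sum_nat => s /andP[Hs1 Hs2].
have Hs : (0 : R) < s.-1%:R by rewrite ltr0n -ltnS prednK // ltnW.
rewrite ler_pdivrMr // mulrC -natrM ler_nat.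
exact: (threshold wfc Hg0 HT).
Qed.
End WLower.
Lemma card_span (m : nat) (F : {set 'I_m}) u0 : u0 \in F ->
  exists2 u, u \in F & exists2 v, v \in F & (#|F| <= (v - u).+1)%N /\
    (forall w, w \in F -> u <= w <= v)%N.
Proof.
move=> Hu0.
case: (arg_minnP (fun i : 'I_m => val i) Hu0) => u Hu Humin.
case: (arg_maxnP (fun i : 'I_m => val i) Hu0) => v Hv Hvmax.
exists u => //; exists v => //.
have Hr : forall w, w \in F -> (u <= w <= v)%N.
  by move=> w Hw; rewrite Humin //=; exact: (Hvmax w Hw).
split => //.
pose f (w : 'I_m) : 'I_(v - u).+1 := inord (w - u).
rewrite -[X in (_ <= X)%N]card_ord.
apply: (@leq_card_in _ _ f) => w1 w2 Hw1 Hw2; rewrite /f => /(congr1 val).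
have /andP[a1 b1] := Hr _ Hw1; have /andP[a2 b2] := Hr _ Hw2.
have L1 : (w1 - u < (v - u).+1)%N by rewrite ltnS leq_sub2r.
have L2 : (w2 - u < (v - u).+1)%N by rewrite ltnS leq_sub2r.
rewrite /= (inordK L1) (inordK L2) => E; apply: val_inj => /=; lia.
Qed.
Section Geo.
Local Open Scope ring_scope.
Variables (R : realType) (n : nat) (C : R).
Hypothesis C_gt0 : 0 < C.

Definition aslope (e : nat) : R := e%:R / (n.-1)%:R.

Lemma aslope_01 (e : nat) : (e < n)%N -> 0 <= aslope e <= 1.
Proof.
move=> He; rewrite /aslope.
case: (posnP n.-1) => Hn.
  by rewrite Hn invr0 mulr0 lexx ler01.
rewrite divr_ge0 ?ler0n //= ler_pdivrMr ?ltr0n // mul1r ler_nat.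
by rewrite -ltnS prednK //; apply: leq_ltn_trans He.
Qed.

Lemma strip_abs a b (p : pixel n) : 0 <= a <= 1 -> in_strip a b C p ->
  - C <= a * px R p + b - py R p <= C.
Proof.
move=> /andP[Ha0 Ha1]; rewrite /in_strip /dist_line.
set z := a * _ + b - _.
have Hs : 0 < Num.sqrt (1 + a ^+ 2) by rewrite sqrtr_gt0 ltr_pwDl // sqr_ge0.
rewrite ler_pdivrMr // => Hz.
have Hs2 : Num.sqrt (1 + a ^+ 2) <= 2.
  rewrite -[X in _ <= X](@ger0_norm _ 2) // -sqrtr_sqr ler_sqrt ?sqr_ge0 //.
  have : a ^+ 2 <= 1 by rewrite expr2; apply: (le_trans (ler_wpM2l Ha0 Ha1)); rewrite mulr1.
  lra.
rewrite -ler_norml; apply: (le_trans Hz).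
have HC2 : 0 <= C / 2 by rewrite divr_ge0 // ltW.
have := ler_wpM2l HC2 Hs2; lra.
Qed.

Definition SA (A : {set pixel n}) : {set 'I_n} :=
  [set e : 'I_n | `[< exists b : R, in_strip_set (aslope e) b C A >]].

Lemma SA_strip A (e : 'I_n) : e \in SA A ->
  exists b, forall p, p \in A -> - C <= aslope e * px R p + b - py R p <= C.
Proof.
rewrite inE => /asboolP[b Hb]; exists b => p Hp.
by apply: strip_abs; [apply: aslope_01 | apply: Hb].
Qed.


Lemma geo_bound (A : {set pixel n}) :
  (#|SA A|%:R * #|A|%:R : R) <= (8 * C + 1) * (2 * C + 1) * n%:R.
Proof.
have HC : 0 < C := C_gt0.
have HK : 0 <= (8 * C + 1) * (2 * C + 1) * n%:R.
  by apply: mulr_ge0; [apply: mulr_ge0; lra | exact: ler0n].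
case: (set_0Vmem (SA A)) => [-> | [e0 He0]]; first by rewrite cards0 mul0r.
case: (set_0Vmem A) => [-> | [p0 Hp0]]; first by rewrite cards0 mulr0.
have [b0 Hb0] := SA_strip He0.
pose xs := [set p.1 | p in A].
have Hx0 : p0.1 \in xs by apply: imset_f.
have [u Hu [v Hv [Hxs Hxr]]] := card_span Hx0.
have Huv : (u <= v)%N by have /andP[] := Hxr u Hu.
have Hcol : forall x : 'I_n, (#|[set y | (x, y) \in A]|%:R : R) <= 2 * C + 1.
  move=> x; case: (set_0Vmem [set y | (x, y) \in A]) => [-> | [y0 Hy0]].
    by rewrite cards0; lra.
  have [y1 Hy1 [y2 Hy2 [Hc Hyr]]] := card_span Hy0.
  have Hy12 : (y1 <= y2)%N by have /andP[] := Hyr y1 Hy1.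
  rewrite inE in Hy1; rewrite inE in Hy2.
  have := Hb0 _ Hy1; have := Hb0 _ Hy2; rewrite /px /py /= => H2 H1.
  apply: le_trans (_ : ((y2 - y1).+1)%:R <= _); first by rewrite ler_nat.
  rewrite -addn1 natrD natrB //; lra.
have HA : (#|A| <= \sum_(x in xs) #|[set y | (x, y) \in A]|)%N.
  have Hsub : A \subset \bigcup_(x in xs) [set (x, y) | y in [set y | (x, y) \in A]].
    apply/subsetP => p Hp; apply/bigcupP; exists p.1; first by apply: imset_f.
    by apply/imsetP; exists p.2; rewrite ?inE -surjective_pairing.
  apply: leq_trans (subset_leq_card Hsub) _.
  apply: leq_trans (card_big_setU_le _ _ _) _.
  by apply: leq_sum => x _; apply: leq_imset_card.
have HAr : (#|A|%:R : R) <= (v - u).+1%:R * (2 * C + 1).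
  apply: le_trans (_ : (\sum_(x in xs) #|[set y | (x, y) \in A]|)%:R <= _).
    by rewrite ler_nat.
  rewrite natr_sum; apply: le_trans (_ : \sum_(x in xs) (2 * C + 1) <= _).
    by apply: ler_sum => x _; apply: Hcol.
  rewrite sumr_const -[(2 * C + 1) *+ _]mulr_natl; apply: ler_wpM2r; first by lra.
  by rewrite ler_nat.
have [pu Hpu Eu] := imsetP Hu; have [pv Hpv Ev] := imsetP Hv.
have Hvn : (v < n)%N by [].
have Hsl : forall e e' : 'I_n, e \in SA A -> e' \in SA A ->
    ((e : nat)%:R - (e' : nat)%:R) * (v - u)%:R <= 4 * C * (n.-1)%:R.
  move=> e e' He He'.
  case: (posnP n.-1) => Hn.
    have -> : (v - u)%N = 0%N by move: Hvn Hn; lia.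
    by rewrite mulr0 Hn mulr0.
  have [b Hb] := SA_strip He; have [b' Hb'] := SA_strip He'.
  have := Hb _ Hpu; have := Hb _ Hpv; have := Hb' _ Hpu; have := Hb' _ Hpv.
  rewrite /px -Eu -Ev => H1 H2 H3 H4.
  have key : (aslope e - aslope e') * (v%:R - u%:R) <= 4 * C.
    set a := aslope e in H3 H4 *; set a' := aslope e' in H1 H2 *.
    set yu := py R pu in H2 H4; set yv := py R pv in H1 H3.
    have -> : (a - a') * (v%:R - u%:R) =
      (a * v%:R + b - yv) - (a * u%:R + b - yu) - (a' * v%:R + b' - yv) + (a' * u%:R + b' - yu).
      by ring.
    lra.
  have HN : (0 : R) < (n.-1)%:R by rewrite ltr0n.
  have Ee : forall k : nat, (k%:R : R) = aslope k * (n.-1)%:R.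
    by move=> k; rewrite /aslope divfK // gt_eqF.
  rewrite (Ee e) (Ee e') -mulrBl natrB // mulrAC.
  by apply: ler_wpM2r => //; apply: ltW.
case: (posnP (v - u)) => Hw.
  have HS : (#|SA A|%:R : R) <= n%:R.
    by rewrite ler_nat; apply: leq_trans (max_card _) _; rewrite card_ord.
  rewrite Hw in HAr.
  have HS0 : (0 : R) <= #|SA A|%:R by [].
  have HA0 : (0 : R) <= #|A|%:R by [].
  have := ler_pM HS0 HA0 HS HAr.
  have Hn0 : (0 : R) <= n%:R by [].
  nra.
have [e1 He1 [e2 He2 [HcS HSr]]] := card_span He0.
have He12 : (e1 <= e2)%N by have /andP[] := HSr e1 He1.
have := Hsl e2 e1 He2 He1.
have HS : (#|SA A|%:R : R) - 1 <= (e2 : nat)%:R - (e1 : nat)%:R.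
  rewrite -natrB //; have : (#|SA A| <= (e2 - e1) + 1)%N by rewrite addn1.
  by rewrite -(ler_nat R) natrD; lra.
have Hw1 : (1 : R) <= (v - u)%:R by rewrite ler1n.
have Hwn : ((v - u)%:R : R) + 1 <= n%:R.
  by rewrite natr1 ler_nat; apply: leq_ltn_trans (leq_subr u v) Hvn.
have Hn1 : ((n.-1)%:R : R) <= n%:R by rewrite ler_nat leq_pred.
set S := (#|SA A|%:R : R) in HS *.
set W := ((v - u)%:R : R) in Hw1 Hwn HAr *.
set D := (e2 : nat)%:R - (e1 : nat)%:R in HS *.
set Nn := (n%:R : R) in Hwn Hn1 HK *.
set N1 := ((n.-1)%:R : R) in Hn1 *.
move=> Hsl2.
have S1 : 1 <= S.
  by rewrite /S ler1n card_gt0; apply/set0Pn; exists e0.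
have Hw' : (S - 1) * W <= 4 * C * Nn.
  apply: le_trans (_ : D * W <= _); first by apply: ler_wpM2r; lra.
  apply: (le_trans Hsl2); apply: ler_wpM2l => //; lra.
have HSW : S * (W + 1) <= (8 * C + 1) * Nn.
  have : S - 1 <= (S - 1) * W by rewrite -[X in X <= _]mulr1; apply: ler_wpM2l; lra.
  nra.
have HA1 : (#|A|%:R : R) <= (W + 1) * (2 * C + 1) by rewrite -natr1 in HAr.
have HA0 : (0 : R) <= #|A|%:R by [].
apply: le_trans (_ : S * ((W + 1) * (2 * C + 1)) <= _).
  by apply: ler_wpM2l => //; lra.
by rewrite mulrA [X in _ <= X]mulrAC; apply: ler_wpM2r => //; lra.
Qed.

End Geo.
Section Density.
Local Open Scope ring_scope.
Variables (R : realType) (n : nat) (C : R) (Q : nat) (PS : {set {set pixel n}}).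
Hypothesis HPS : strip_pattern_set C Q PS.

Definition Mset (A : {set pixel n}) (e : 'I_n) : {set {set pixel n}} :=
  [set T in PS | (A \subset T) && `[< exists b : R, in_strip_set (aslope R n e) b C T >]].

Lemma density (A : {set pixel n}) : A != set0 ->
  (#|[set T in PS | A \subset T]| <= #|SA C A| * Q)%N.
Proof.
move=> HA0; case: HPS => _ Hslope Hdens.
have Hsub : [set T in PS | A \subset T] \subset \bigcup_(e in SA C A) Mset A e.
  apply/subsetP => T; rewrite inE => /andP[HT HAT].
  have [a [b [[e He Ea] Hb]]] := Hslope T HT.
  apply/bigcupP; exists (Ordinal He).
    rewrite inE; apply/asboolP; exists b => p Hp.
    by rewrite /aslope /= -Ea; apply: Hb; apply: (subsetP HAT).
  rewrite inE HT HAT /=; apply/asboolP; exists b.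
  by rewrite /aslope /= -Ea.
apply: leq_trans (subset_leq_card Hsub) _.
apply: leq_trans (card_big_setU_le _ _ _) _.
rewrite -sum_nat_const; apply: leq_sum => e He.
apply: Hdens.
- by apply/subsetP => T; rewrite inE => /andP[].
- exists (aslope R n e); first by exists e.
  by move=> T; rewrite inE => /andP[_ /andP[_ /asboolP]].
- have [p Hp] := set0Pn _ HA0.
  apply/set0Pn; exists p; apply/bigcapP => T; rewrite inE => /andP[_ /andP[HAT _]].
  exact: (subsetP HAT).
Qed.
End Density.
Lemma csizeE n (c : circuit n) : csize c = (\sum_(g < size c) fanin c g)%N.
Proof. by rewrite /csize /fanin sumnE big_map (big_nth [::]) big_mkord. Qed.

Lemma sum_Wt n (c : circuit n) (PS : {set {set pixel n}}) :
  (\sum_(T in PS) Wt c T =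
   \sum_(g < size c) fanin c g * #|Sof c g| * #|[set T in PS | Sof c g \subset T]|)%N.
Proof.
rewrite /Wt.
under eq_bigr => T _ do rewrite big_mkcond /=.
rewrite exchange_big /=; apply: eq_bigr => g _.
rewrite -big_mkcondr sum_nat_const mulnC; congr (_ * _)%N.
by apply: eq_card => T; rewrite inE.
Qed.

Section MainLB.
Local Open Scope ring_scope.
Variables (R : realType) (n : nat) (C : R) (Q : nat) (PS : {set {set pixel n}}).
Hypothesis C_gt0 : 0 < C.
Hypothesis HPS : strip_pattern_set C Q PS.

Lemma circuit_lb (c : circuit n) : wf_circuit c -> computes_sets c PS ->
  \sum_(T in PS) ((#|T|%:R : R) * ln (#|T|%:R)) <=
  (csize c)%:R * (Q%:R * ((8 * C + 1) * (2 * C + 1) * n%:R)).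
Proof.
move=> wfc Hc.
have HC : 0 < C := C_gt0.
apply: le_trans (_ : \sum_(T in PS) ((Wt c T)%:R : R) <= _).
  apply: ler_sum => T HT; have [g0 Hg0 E] := Hc T HT.
  exact: (@W_lower R _ c wfc T g0 Hg0 E).
rewrite -natr_sum sum_Wt natr_sum csizeE natr_sum mulr_suml.
apply: ler_sum => g _; rewrite -mulnA natrM; apply: ler_wpM2l; first by apply: ler0n.
case: (eqVneq (Sof c g) set0) => [-> | HA].
  rewrite cards0 mul0n mulr0n; apply: mulr_ge0; first by apply: ler0n.
  by apply: mulr_ge0; [apply: mulr_ge0; lra | apply: ler0n].
apply: le_trans (_ : ((#|Sof c g| * (#|SA C (Sof c g)| * Q))%N%:R : R) <= _).
  by rewrite ler_nat leq_mul2l density // orbT.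
rewrite natrM natrM mulrCA mulrA [X in _ <= X]mulrC; apply: ler_wpM2r; first by apply: ler0n.
exact: (@geo_bound R n C C_gt0 (Sof c g)).
Qed.
End MainLB.
Section Asym.
Local Open Scope ring_scope.
Variable R : realType.

Lemma tlnt (t : nat) (L : R) : 1 <= L -> (t%:R - L) * ln L <= t%:R * ln (t%:R).
Proof.
move=> HL; have lnL := ln_ge0 HL.
have Ht0 : (0 : R) <= t%:R by [].
have H0 : 0 <= (t%:R : R) * ln (t%:R).
  case: t Ht0 => [|t] Ht0; first by rewrite mul0r.
  by apply: mulr_ge0 => //; apply: ln_ge0; rewrite ler1n.
case: (leP L t%:R) => Ht.
  have Hl : ln L <= ln (t%:R : R).
    have PL : L \is Num.pos by rewrite posrE; lra.
    have Pt : (t%:R : R) \is Num.pos by rewrite posrE; lra.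
    by rewrite ler_ln.
  have := ler_wpM2l Ht0 Hl.
  nra.
nra.
Qed.

Lemma sum_tlnt n (PS : {set {set pixel n}}) (L : R) : 1 <= L ->
  ((volume PS)%:R - #|PS|%:R * L) * ln L <= \sum_(T in PS) (#|T|%:R * ln (#|T|%:R)).
Proof.
move=> HL; rewrite /volume natr_sum mulr_natl -sumr_const -sumrB mulr_suml.
by apply: ler_sum => T _; apply: tlnt.
Qed.

Lemma asym (c2 c3 : R) n (PS : {set {set pixel n}}) :
  0 < c2 -> 0 < c3 ->
  (c3 / (2 * c2))^-1 + (c3 / (2 * c2))^-1 ^+ 2 < n%:R ->
  #|PS|%:R <= c2 * n%:R ^+ 2 -> c3 * n%:R ^+ 3 <= (volume PS)%:R ->
  c3 / 4 * n%:R ^+ 3 * ln (n%:R) <= \sum_(T in PS) (#|T|%:R * ln (#|T|%:R)).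
Proof.
set alpha := c3 / (2 * c2) => Hc2 Hc3 Hn Hm HV.
have Ha : 0 < alpha by rewrite divr_gt0 // mulr_gt0.
have Hai : 0 < alpha^-1 by rewrite invr_gt0.
have Hai2 : 0 <= alpha^-1 ^+ 2 by rewrite sqr_ge0.
set x := (n%:R : R) in Hn Hm HV *.
have Hx : 0 < x by lra.
have HL1 : 1 <= alpha * x.
  have : alpha * alpha^-1 < alpha * x by rewrite ltr_pM2l //; lra.
  by rewrite mulfV ?gt_eqF //; apply: ltW.
have HL2 : 1 <= alpha ^+ 2 * x.
  have : alpha ^+ 2 * alpha^-1 ^+ 2 < alpha ^+ 2 * x.
    by rewrite ltr_pM2l ?exprn_gt0 //; lra.
  by rewrite -exprMn mulfV ?gt_eqF // expr1n; apply: ltW.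
have Hca : c2 * alpha = c3 / 2 by rewrite /alpha; field; rewrite gt_eqF.
have Hln : ln x <= 2 * ln (alpha * x).
  have E : (alpha * x) * (alpha * x) = (alpha ^+ 2 * x) * x by rewrite expr2; ring.
  have P1 : alpha * x \is Num.pos by rewrite posrE; lra.
  have P2 : alpha ^+ 2 * x \is Num.pos by rewrite posrE; lra.
  have P3 : x \is Num.pos by rewrite posrE.
  have := lnM P1 P1; rewrite E (lnM P2 P3) => E2.
  have := ln_ge0 HL2; lra.
have HlnL := ln_ge0 HL1.
apply: le_trans (sum_tlnt PS HL1).
have HmL : #|PS|%:R * (alpha * x) <= c3 / 2 * x ^+ 3.
  apply: le_trans (_ : c2 * x ^+ 2 * (alpha * x) <= _).
    by apply: ler_wpM2r => //; lra.
  have -> : c2 * x ^+ 2 * (alpha * x) = (c2 * alpha) * x ^+ 3 by rewrite !exprS expr0; ring.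
  by rewrite Hca.
have Hx3 : 0 <= x ^+ 3 by rewrite exprn_ge0 // ltW.
apply: le_trans (_ : c3 / 2 * x ^+ 3 * ln (alpha * x) <= _).
  have -> : c3 / 4 * x ^+ 3 * ln x = c3 / 2 * x ^+ 3 * (ln x / 2) by field.
  apply: ler_wpM2l; first by apply: mulr_ge0 => //; lra.
  lra.
apply: ler_wpM2r => //; lra.
Qed.
End Asym.
Lemma foldr_shift (Sg : Type) (op : Sg -> Sg -> Sg) (idx : Sg)
  (opA : associative op) (op0x : left_id idx op) (l : seq Sg) z :
  foldr op z l = op (foldr op idx l) z.
Proof. by elim: l => [|a l IH] /=; rewrite ?op0x // IH opA. Qed.

Section Build.
Variables (n : nat) (PS : {set {set pixel n}}).
Hypothesis HPS : pattern_set PS.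

Definition NB := #|{: pixel n}|.
Definition Ts := enum PS.
Definition seqs (i : nat) := enum (nth set0 Ts i).

Definition bgate (k : nat) : seq (wire n) :=
  let s := seqs (k %/ NB) in
  let j := k %% NB in
  match s with
  | [::] => [::]
  | p0 :: _ =>
    if j == 0%N then [:: WIn p0]
    else if (j < size s)%N then [:: WGate n k.-1; WIn (nth p0 s j)]
    else [:: WGate n k.-1]
  end.

Definition bcirc : circuit n := mkseq bgate (size Ts * NB).

Lemma seqs_nonempty i : (i < size Ts)%N -> (0 < size (seqs i))%N.
Proof.
move=> Hi; rewrite /seqs -cardE; apply/card_gt0P.
have : nth set0 Ts i \in PS by rewrite -mem_enum; apply: mem_nth.
by case: HPS => _ H /H /set0Pn[p Hp]; exists p.
Qed.

Lemma NB_gt0 : (0 < NB)%N.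
Proof.
case: HPS => /set0Pn[T HT] H; have /set0Pn[p _] := H T HT.
by rewrite /NB; apply/card_gt0P; exists p.
Qed.

Lemma size_seqs i : (size (seqs i) <= NB)%N.
Proof. by rewrite /seqs -cardE /NB max_card. Qed.

Lemma bcirc_size : size bcirc = (size Ts * NB)%N.
Proof. by rewrite size_mkseq. Qed.

Lemma bgate_before k : (k < size Ts * NB)%N ->
  (0 < size (bgate k))%N /\ all (wire_before k) (bgate k) /\ (size (bgate k) <= 2)%N.
Proof.
move=> Hk.
have Hi : (k %/ NB < size Ts)%N by rewrite ltn_divLR // NB_gt0.
have := seqs_nonempty Hi; rewrite /bgate.
case: (seqs (k %/ NB)) => [//|p0 s] _.
case: eqP => Hj; first by [].
have Hk0 : (0 < k)%N by rewrite lt0n; apply/eqP => E0; apply: Hj; rewrite E0 mod0n.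
by case: ifP => _ /=; rewrite prednK // ?ltnSn ?Hk0 /= ?andbT // ltnSn.
Qed.

Lemma bcirc_wf : wf_circuit bcirc.
Proof.
move=> k; rewrite bcirc_size => Hk; rewrite nth_mkseq //.
by have [? [? _]] := bgate_before Hk.
Qed.

Lemma bcirc_fanin2 : fanin2 bcirc.
Proof.
apply/allP => G; rewrite /bcirc /mkseq => /mapP[k]; rewrite mem_iota add0n => /andP[_ Hk] ->.
by have [_ [_ ?]] := bgate_before Hk.
Qed.


Lemma bcirc_fanout0 i : (i < size Ts)%N -> fanout0 bcirc (i * NB + NB.-1).
Proof.
move=> Hi; apply/hasPn => G; rewrite /bcirc /mkseq => /mapP[k]; rewrite mem_iota add0n => /andP[_ Hk] ->.
have HN := NB_gt0.
rewrite /bgate; case: (seqs (k %/ NB)) => [//|p0 s].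
case: eqP => Hj /=; first by [].
have Href : (k.-1 != i * NB + NB.-1)%N.
  apply/eqP => E.
  have Ek : k = (i.+1 * NB)%N.
    have Hk0 : (0 < k)%N by rewrite lt0n; apply/eqP => E0; apply: Hj; rewrite E0 mod0n.
    by rewrite mulSn; move: (prednK Hk0) (prednK HN) E; lia.
  by apply: Hj; rewrite Ek modnMl.
by case: ifP => _ /=; rewrite ?orbF Href.
Qed.

Section Vals.
Variables (Sg : Type) (op : Sg -> Sg -> Sg) (idx : Sg) (x : pixel n -> Sg).
Hypotheses (opA : associative op) (op0x : left_id idx op) (opx0 : right_id idx op).

Lemma bvals i j : (i < size Ts)%N -> (j < NB)%N ->
  nth idx (gate_values op idx x bcirc) (i * NB + j) =
  foldr op idx (map x (take j.+1 (seqs i))).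
Proof.
move=> Hi; elim: j => [|j IH] Hj.
  have Hk : (i * NB + 0 < size bcirc)%N.
    by rewrite bcirc_size addn0 ltn_pmul2r // NB_gt0.
  have Hk' : (i * NB + 0 < size Ts * NB)%N by rewrite -bcirc_size.
  have [_ [Hb _]] := bgate_before Hk'.
  rewrite nth_gate_values // ?nth_mkseq -?bcirc_size // /bgate.
  rewrite divnMDl ?NB_gt0 // divn_small // addn0 modnMDl mod0n /=.
  have := seqs_nonempty Hi.
  by case E: (seqs i) => [//|p0 s] _ /=; rewrite take0.
have HN := NB_gt0.
have Hk : (i * NB + j.+1 < size bcirc)%N.
  rewrite bcirc_size; apply: leq_trans (_ : i.+1 * NB <= _)%N; last by rewrite leq_mul2r Hi orbT.
  by rewrite mulSn addnC ltn_add2r.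
have Hk' : (i * NB + j.+1 < size Ts * NB)%N by rewrite -bcirc_size.
have [_ [Hb _]] := bgate_before Hk'.
rewrite nth_gate_values // ?nth_mkseq -?bcirc_size // /bgate.
rewrite divnMDl // (divn_small Hj) addn0 modnMDl (modn_small Hj) /=.
have := seqs_nonempty Hi; have IH' := IH (ltnW Hj).
case E: (seqs i) IH' => [//|p0 s] IH' _.
rewrite -E in IH' *; rewrite addnS /=.
case: ifP => Hjs /=.
  rewrite IH' (take_nth p0 Hjs) map_rcons foldr_rcons opx0.
  by rewrite -foldr_shift // E.
have Hsz : (size (seqs i) <= j.+1)%N by rewrite leqNgt Hjs.
by rewrite IH' opx0 !take_oversize // (leq_trans Hsz).
Qed.

Lemma bout i : (i < size Ts)%N ->
  nth idx (gate_values op idx x bcirc) (i * NB + NB.-1) =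
  foldr op idx (map x (enum (nth set0 Ts i))).
Proof.
move=> Hi; have HN := NB_gt0.
by rewrite bvals ?prednK // ?take_oversize //; apply: size_seqs.
Qed.
End Vals.

Lemma bout_pos i : (i < size Ts)%N -> (i * NB + NB.-1 < size bcirc)%N.
Proof.
move=> Hi; rewrite bcirc_size; have HN := NB_gt0.
apply: leq_trans (_ : i.+1 * NB <= _)%N; last by rewrite leq_mul2r Hi orbT.
by rewrite mulSn; move: (prednK HN); lia.
Qed.

Lemma bcirc_or : computes_or bcirc PS.
Proof.
move=> T HT.
have HTi : (index T Ts < size Ts)%N by rewrite index_mem mem_enum.
exists (index T Ts * NB + NB.-1)%N; first exact: bout_pos.
split; first exact: bcirc_fanout0.
move=> x; rewrite (bout (op := orb) (idx := false) x orbA orFb orbF HTi).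
rewrite nth_index ?mem_enum // /or_sum.
have -> : forall s : seq (pixel n), foldr orb false (map x s) = has x s.
  by elim => //= p s ->.
apply/hasP/existsP => [[p Hp Hx]|[p /andP[Hp Hx]]]; exists p; rewrite ?mem_enum //.
by rewrite -mem_enum Hp.
Qed.

Lemma bcirc_sum : computes_sum bcirc PS.
Proof.
move=> T HT.
have HTi : (index T Ts < size Ts)%N by rewrite index_mem mem_enum.
exists (index T Ts * NB + NB.-1)%N; first exact: bout_pos.
split; first exact: bcirc_fanout0.
move=> x; rewrite (bout (op := addn) (idx := 0%N) x addnA add0n addn0 HTi).
rewrite nth_index ?mem_enum // /nat_sum -big_enum.
by rewrite -[foldr _ _ _]/(sumn _) sumnE big_map.
Qed.

End Build.
Local Open Scope ring_scope.
Lemma min_nat_ge (R : realType) (P : nat -> Prop) (B : R) :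
  (exists k, P k) -> (forall k, P k -> B <= k%:R) -> B <= (min_nat P)%:R.
Proof.
move=> [k Hk] H; rewrite /min_nat; case: pselect => [h|[]]; last by exists k.
by case: ex_minnP => m /asboolP Hm _; apply: H.
Qed.

Lemma csize_fanin2 n (c : circuit n) : fanin2 c -> (csize c <= 2 * size c)%N.
Proof.
rewrite /csize; elim: c => //= g c IH /andP[Hg Hc]; rewrite mulnS.
by apply: leq_add => //; apply: IH.
Qed.

Unset Implicit Arguments.

Theorem theorem4 (R : realType) (C : R) (Q : nat) (L : complexity)
    (LL : forall n : nat, {set {set pixel n}}) :
  0 < C ->
  (forall n : nat, (0 < n)%N -> strip_pattern_set C Q (LL n)) ->
  (* |L_n| = Theta(n^2) *)
  (exists c1 c2 : R, [/\ 0 < c1, 0 < c2 & exists N : nat, forall n : nat, (N <= n)%N ->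
      c1 * (n%:R) ^+ 2 <= (#|LL n|)%:R /\ (#|LL n|)%:R <= c2 * (n%:R) ^+ 2]) ->
  (* V(L_n) = Omega(n^3) *)
  (exists c3 : R, 0 < c3 /\ exists N : nat, forall n : nat, (N <= n)%N ->
      c3 * (n%:R) ^+ 3 <= (volume (LL n))%:R) ->
  (* L(L_n) = Omega(n^2 log n) *)
  exists c : R, 0 < c /\ exists N : nat, forall n : nat, (N <= n)%N ->
      c * (n%:R) ^+ 2 * ln (n%:R) <= (cost L (LL n))%:R.
Proof.
move=> HC HS [c1 [c2 [Hc1 Hc2 [N2 H12]]]] [c3 [Hc3 [N3 H3]]].
pose K := (8 * C + 1) * (2 * C + 1).
have HK : 0 < K by apply: mulr_gt0; lra.
pose D := (Q.+1)%:R * K.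
have HD : 0 < D by rewrite mulr_gt0 // ltr0n.
pose alpha := c3 / (2 * c2).
have Ha : 0 < alpha by rewrite divr_gt0 // mulr_gt0.
pose X := alpha^-1 + alpha^-1 ^+ 2.
have HX : 0 <= X by rewrite addr_ge0 ?sqr_ge0 // ltW // invr_gt0.
exists (c3 / (8 * D)); split; first by rewrite divr_gt0 // mulr_gt0.
exists (maxn (maxn (Num.Def.archi_bound X) N2) (maxn N3 1)) => n.
rewrite !geq_max => /andP[/andP[HnX HnN2] /andP[HnN3 Hn1]].
have HXn : X < n%:R by apply: lt_le_trans (archi_boundP HX) _; rewrite ler_nat.
have HPS := HS n Hn1.
have [_ Hm] := H12 n HnN2.
have HV := H3 n HnN3.
have Hasym := asym Hc2 Hc3 HXn Hm HV.
have Hn0 : (0 : R) < n%:R by rewrite ltr0n.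
have Hlnn : 0 <= ln (n%:R : R) by apply: ln_ge0; rewrite ler1n.
set B := c3 / (8 * D) * n%:R ^+ 2 * ln n%:R.
have HB : 0 <= B.
  apply: mulr_ge0 => //; apply: mulr_ge0; last by rewrite exprn_ge0 // ltW.
  by rewrite divr_ge0 // ?ltW // mulr_gt0.
have Hcirc : forall c, wf_circuit c -> computes_sets c (LL n) -> B * 2 <= (csize c)%:R.
  move=> c wfc Hcs.
  have Hlb := circuit_lb HC HPS wfc Hcs.
  have E : B * 2 = (c3 / 4 * n%:R ^+ 3 * ln n%:R) / (D * n%:R).
    rewrite /B /D; field.
    have HQ : (0 : R) < 1 + Q%:R by rewrite ltr_pwDl ?ler0n.
    by rewrite !gt_eqF.
  rewrite E ler_pdivrMr; last by rewrite mulr_gt0.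
  apply: (le_trans Hasym); apply: (le_trans Hlb).
  apply: ler_wpM2l; first by apply: ler0n.
  rewrite /D -/K mulrA; apply: ler_wpM2r; first by apply: ler0n.
  by apply: ler_wpM2r; [apply: ltW | rewrite ler_nat].
have HPS0 := HPS; case: HPS0 => Hpat _ _.
case: L; rewrite /cost.
- apply: min_nat_ge.
    exists (csize (bcirc (LL n))); exists (bcirc (LL n)); split => //.
      exact: bcirc_wf.
    exact: bcirc_or.
  move=> k [c [wfc Hor <-]]; have := Hcirc c wfc (or_sets Hor); lra.
- apply: min_nat_ge.
    exists (csize (bcirc (LL n))); exists (bcirc (LL n)); split => //.
      exact: bcirc_wf.
    exact: bcirc_sum.
  move=> k [c [wfc Hor <-]]; have := Hcirc c wfc (sum_sets Hor); lra.
- apply: min_nat_ge.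
    exists (size (bcirc (LL n))); exists (bcirc (LL n)); split => //.
    + exact: bcirc_wf.
    + exact: bcirc_fanin2.
    + exact: bcirc_or.
  move=> k [c [wfc Hf Hor <-]]; have := Hcirc c wfc (or_sets Hor).
  have : ((csize c)%:R : R) <= 2 * (size c)%:R.
    by rewrite -natrM ler_nat; apply: csize_fanin2.
  lra.
- apply: min_nat_ge.
    exists (size (bcirc (LL n))); exists (bcirc (LL n)); split => //.
    + exact: bcirc_wf.
    + exact: bcirc_fanin2.
    + exact: bcirc_sum.
  move=> k [c [wfc Hf Hor <-]]; have := Hcirc c wfc (sum_sets Hor).
  have : ((csize c)%:R : R) <= 2 * (size c)%:R.
    by rewrite -natrM ler_nat; apply: csize_fanin2.
  lra.
Qed.
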